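(* Let $K$ be an algebraically closed field of characteristic zero and $e_1\in 3+2\mathbb{N}$. Let $S\subset K^3$ be the surface $x_3^2+(x_1^{e_1}-x_2^2)x_1=0$, $S'\subset K^3$ the surface $\alpha^{2e_1}-4\beta\gamma=0$, $\sigma(\alpha,\beta,\gamma)=(-\alpha,\gamma,\beta)$ on $S'$ with $\sigma^*(f)=f\circ\sigma$, and identify $\mathcal{O}(S)$ with a subring of $\mathcal{O}(S')$ via the dominant morphism $F(\alpha,\beta,\gamma)=(\alpha^2,\beta+\gamma,\alpha(\beta-\gamma))$. Then for every $K$-derivation $D$ of $\mathcal{O}(S)$ there exists a unique derivation $D'$ of $\mathcal{O}(S')$ commuting with $\sigma^*$ and coinciding with $D$ on $\mathcal{O}(S)$. Moreover, if $D$ is weighted homogeneous on $S$ then $D'$ is weighted homogeneous on $S'$.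
   Context: $S$ is graded by the weights $2,e_1,e_1+1$ on $x_1,x_2,x_3$, and $S'$ by the weights $1,e_1,e_1$ on $\alpha,\beta,\gamma$. A derivation is weighted homogeneous (of degree $r$) if it sends homogeneous elements of degree $m$ to homogeneous elements of degree $m+r$. *)

(* Defs.v *)
From HB Require Import structures.
From mathcomp Require Import all_boot all_order all_algebra.
From mathcomp Require Import ring.
From mathcomp Require Import mpoly.
Set Implicit Arguments. Unset Strict Implicit. Unset Printing Implicit Defensive.
Import Order.TTheory GRing.Theory Num.Theory.
Local Open Scope ring_scope.

Definition i0 : 'I_3 := @Ordinal 3 0 isT.
Definition i1 : 'I_3 := @Ordinal 3 1 isT.
Definition i2 : 'I_3 := @Ordinal 3 2 isT.

Definition mkpt (K : Type) (a b c : K) : 'I_3 -> K :=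
  fun i => match val i with 0 => a | 1 => b | _ => c end.

Section Surfaces.
Variable K : fieldType.

Definition Pt (P : pred ('I_3 -> K)) := {v : 'I_3 -> K | P v}.

(* Regular functions on the surface: restrictions of polynomials.
   (K algebraically closed and the defining polynomials are irreducible,
   so this is the coordinate ring O(S).) *)
Definition regular (P : pred ('I_3 -> K)) (f : Pt P -> K) : Prop :=
  exists p : {mpoly K[3]}, forall x : Pt P, f x = p.@[val x].

(* A derivation of O(S): an operator defined on functions on the points,
   mapping regular functions to regular functions, additive and Leibniz on
   regular functions (only its values on regular functions matter). *)
Definition is_derivation (P : pred ('I_3 -> K)) (D : (Pt P -> K) -> (Pt P -> K)) : Prop :=
  [/\ forall f, regular f -> regular (D f),
      forall f g, regular f -> regular g ->
        forall x, D (fun y => f y + g y) x = D f x + D g x &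
      forall f g, regular f -> regular g ->
        forall x, D (fun y => f y * g y) x = f x * D g x + D f x * g x].

Definition is_Kderivation (P : pred ('I_3 -> K)) (D : (Pt P -> K) -> (Pt P -> K)) : Prop :=
  is_derivation D /\
  forall (c : K) f, regular f -> forall x, D (fun y => c * f y) x = c * D f x.

Definition wdeg (w : 'I_3 -> nat) (m : 'X_{1..3}) : nat := (\sum_(i < 3) w i * m i)%N.

Definition whomog_poly (w : 'I_3 -> nat) (d : int) (p : {mpoly K[3]}) : Prop :=
  forall m, m \in msupp p -> (wdeg w m)%:Z = d.

Definition whomog (P : pred ('I_3 -> K)) (w : 'I_3 -> nat) (d : int) (f : Pt P -> K) : Prop :=
  exists p : {mpoly K[3]}, whomog_poly w d p /\ forall x : Pt P, f x = p.@[val x].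

Definition whomog_der (P : pred ('I_3 -> K)) (w : 'I_3 -> nat) (r : int)
  (D : (Pt P -> K) -> (Pt P -> K)) : Prop :=
  forall (m : nat) f, whomog w m%:Z f -> whomog w (m%:Z + r) (D f).

Variable e1 : nat.

Definition onS : pred ('I_3 -> K) :=
  fun v => v i2 ^+ 2 + (v i0 ^+ e1 - v i1 ^+ 2) * v i0 == 0.
Definition onS' : pred ('I_3 -> K) :=
  fun v => v i0 ^+ (2 * e1) - 4 * v i1 * v i2 == 0.

Definition wS : 'I_3 -> nat := fun i => match val i with 0 => 2%N | 1 => e1 | _ => e1.+1 end.
Definition wS' : 'I_3 -> nat := fun i => match val i with 0 => 1%N | _ => e1 end.

Definition Fmap (v : 'I_3 -> K) : 'I_3 -> K :=
  mkpt (v i0 ^+ 2) (v i1 + v i2) (v i0 * (v i1 - v i2)).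
Definition sigmap (v : 'I_3 -> K) : 'I_3 -> K := mkpt (- v i0) (v i2) (v i1).

Lemma Fmap_onS v : onS' v -> onS (Fmap v).
Proof.
rewrite /onS /onS' /Fmap /mkpt /= => /eqP H.
apply/eqP.
have -> : (v i0 * (v i1 - v i2)) ^+ 2 + ((v i0 ^+ 2) ^+ e1 - (v i1 + v i2) ^+ 2) * v i0 ^+ 2
   = v i0 ^+ 2 * (v i0 ^+ (2 * e1) - 4 * v i1 * v i2).
  rewrite -exprM mulnC; ring.
by rewrite H mulr0.
Qed.

Lemma sigmap_onS' v : onS' v -> onS' (sigmap v).
Proof.
rewrite /onS' /sigmap /mkpt /= => H.
by rewrite exprM sqrrN -exprM -mulrA [v i2 * _]mulrC mulrA.
Qed.

Definition Fpt (x : Pt onS') : Pt onS := exist _ (Fmap (val x)) (Fmap_onS (valP x)).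
Definition sigpt (x : Pt onS') : Pt onS' := exist _ (sigmap (val x)) (sigmap_onS' (valP x)).

End Surfaces.

Definition commutes_sigma (K : fieldType) (e1 : nat)
  (D' : (Pt (@onS' K e1) -> K) -> (Pt (@onS' K e1) -> K)) : Prop :=
  forall f, regular f -> forall x, D' (f \o @sigpt K e1) x = D' f (sigpt x).

Definition extends_along_F (K : fieldType) (e1 : nat)
  (D : (Pt (@onS K e1) -> K) -> (Pt (@onS K e1) -> K))
  (D' : (Pt (@onS' K e1) -> K) -> (Pt (@onS' K e1) -> K)) : Prop :=
  forall f, regular f -> forall x, D' (f \o @Fpt K e1) x = D f (Fpt x).

(* Main.v *)
Require Import Defs.
From HB Require Import structures.
From mathcomp Require Import all_boot all_order all_algebra.
From mathcomp Require Import ring.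
From mathcomp Require Import mpoly.
From Stdlib Require Import ClassicalEpsilon FunctionalExtensionality.
Set Implicit Arguments. Unset Strict Implicit. Unset Printing Implicit Defensive.
Import GRing.Theory.
Local Open Scope ring_scope.

Lemma natf_nz (K : fieldType) (charK : [pchar K] =i pred0) n :
  (0 < n)%N -> n%:R != 0 :> K.
Proof.
move=> n0; apply/negP => /(natf0_pchar n0) [p]; by rewrite charK.
Qed.

Lemma mpoly_gen_ind (K : fieldType) (Q : {mpoly K[3]} -> Prop) :
  (forall c, Q c%:MP) -> (forall i, Q 'X_i) ->
  (forall p q, Q p -> Q q -> Q (p + q)) ->
  (forall p q, Q p -> Q q -> Q (p * q)) -> forall p, Q p.
Proof.
move=> hC hX hD hM.
have Q1 : Q 1 by have := hC 1; rewrite mpolyC1.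
have hXn : forall i k, Q ('X_i ^+ k).
  move=> i; elim => [|k IH]; first by rewrite expr0.
  by rewrite exprS; apply: (hM).
have hXm : forall m, Q 'X_[m].
  move=> m; rewrite mpolyXE_id.
  rewrite big_ord_recr big_ord_recr big_ord_recr big_ord0 /=.
  by apply: (hM) => //; apply: (hM) => //; apply: (hM) => //.
move=> p; elim/mpolyind: p => [|c m p _ _ Hp].
  by have := hC 0; rewrite mpolyC0.
by apply: (hD) => //; rewrite -mul_mpolyC; apply: (hM).
Qed.

Definition i3 (K : Type) (f : 'I_3 -> K) := (f i0, f i1, f i2).

Lemma ord3_cases (i : 'I_3) : i = i0 \/ i = i1 \/ i = i2.
Proof.
case: i => [[|[|[|k]]] Hi]; rewrite ?(Hi); try by [].
- by left; apply: val_inj.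
- by right; left; apply: val_inj.
- by right; right; apply: val_inj.
Qed.

Lemma mderivXU (K : fieldType) (i j : 'I_3) :
  mderiv j ('X_i : {mpoly K[3]}) = (i == j)%:R%:MP.
Proof.
rewrite mderivX mnm1E; case: eqP => [->|_].
  have -> : (U_(j) - U_(j) = 0)%MM by apply/mnmP => k; rewrite mnmBE mnm0E subnn.
  by rewrite mpolyX0 scale1r.
by rewrite scale0r mpolyC0.
Qed.

Definition dot3 (K : fieldType) (p : {mpoly K[3]}) (v : 'I_3 -> K) (d : 'I_3 -> K) :=
  (mderiv i0 p).@[v] * d i0 + (mderiv i1 p).@[v] * d i1 + (mderiv i2 p).@[v] * d i2.

Lemma chain_gen (K : fieldType) (v : 'I_3 -> K) (d : {mpoly K[3]} -> K) :
  (forall c, d c%:MP = 0) -> (forall p q, d (p + q) = d p + d q) ->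
  (forall p q, d (p * q) = p.@[v] * d q + d p * q.@[v]) ->
  forall p, d p = dot3 p v (fun i => d 'X_i).
Proof.
move=> hC hD hM; elim/mpoly_gen_ind => [c|i|p q Hp Hq|p q Hp Hq].
- by rewrite hC /dot3 !mderivC !meval0; ring.
- rewrite /dot3 !mderivXU !mevalC.
  by case: (ord3_cases i) => [->|[->|->]]; rewrite !eqxx /=; ring.
- by rewrite hD Hp Hq /dot3 !mderivD !mevalD; ring.
- by rewrite hM Hp Hq /dot3 !mderivM !mevalD !mevalM; ring.
Qed.


Definition pf (K : fieldType) (f : ('I_3 -> K) -> K) :=
  exists p : {mpoly K[3]}, forall v, f v = p.@[v].

Lemma pf_ind (K : fieldType) (Q : (('I_3 -> K) -> K) -> Prop) :
  (forall c, Q (fun _ => c)) -> (forall i, Q (fun v => v i)) ->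
  (forall f g, pf f -> pf g -> Q f -> Q g -> Q (fun v => f v + g v)) ->
  (forall f g, pf f -> pf g -> Q f -> Q g -> Q (fun v => f v * g v)) ->
  forall f, pf f -> Q f.
Proof.
move=> hC hX hD hM f [p Hp].
have -> : f = (fun v => p.@[v]) by apply: functional_extensionality.
elim/mpoly_gen_ind: p {f Hp}.
- move=> c; have -> : (fun v => (c%:MP : {mpoly K[3]}).@[v]) = (fun _ => c) by
    apply: functional_extensionality => v; rewrite mevalC.
  exact: hC.
- move=> i; have -> : (fun v => ('X_i : {mpoly K[3]}).@[v]) = (fun v => v i) by
    apply: functional_extensionality => v; rewrite mevalXU.
  exact: hX.
- move=> p q Hp Hq; have -> : (fun v => (p + q).@[v]) = (fun v => p.@[v] + q.@[v]) by
    apply: functional_extensionality => v; rewrite mevalD.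
  by apply: hD => //; [exists p|exists q].
- move=> p q Hp Hq; have -> : (fun v => (p * q).@[v]) = (fun v => p.@[v] * q.@[v]) by
    apply: functional_extensionality => v; rewrite mevalM.
  by apply: hM => //; [exists p|exists q].
Qed.

Lemma pf_const (K : fieldType) (c : K) : pf (fun _ => c).
Proof. by exists c%:MP => v; rewrite mevalC. Qed.
Lemma pf_coord (K : fieldType) i : pf (fun v : 'I_3 -> K => v i).
Proof. by exists 'X_i => v; rewrite mevalXU. Qed.
Lemma pf_add (K : fieldType) (f g : ('I_3 -> K) -> K) :
  pf f -> pf g -> pf (fun v => f v + g v).
Proof. by move=> [p Hp] [q Hq]; exists (p + q) => v; rewrite mevalD Hp Hq. Qed.
Lemma pf_mul (K : fieldType) (f g : ('I_3 -> K) -> K) :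
  pf f -> pf g -> pf (fun v => f v * g v).
Proof. by move=> [p Hp] [q Hq]; exists (p * q) => v; rewrite mevalM Hp Hq. Qed.
Lemma pf_opp (K : fieldType) (f : ('I_3 -> K) -> K) :
  pf f -> pf (fun v => - f v).
Proof. by move=> [p Hp]; exists (- p) => v; rewrite mevalN Hp. Qed.
Lemma pf_sub (K : fieldType) (f g : ('I_3 -> K) -> K) :
  pf f -> pf g -> pf (fun v => f v - g v).
Proof. by move=> hf hg; apply: pf_add => //; apply: pf_opp. Qed.
Lemma pf_ext (K : fieldType) (f g : ('I_3 -> K) -> K) :
  (forall v, f v = g v) -> pf f -> pf g.
Proof. by move=> e [p Hp]; exists p => v; rewrite -e. Qed.
Lemma pf_exp (K : fieldType) (f : ('I_3 -> K) -> K) k :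
  pf f -> pf (fun v => f v ^+ k).
Proof.
move=> hf; elim: k => [|k IH].
  by apply: (pf_ext _ (pf_const 1)) => v; rewrite expr0.
by apply: (pf_ext _ (pf_mul hf IH)) => v; rewrite exprS.
Qed.

Lemma pf_comp (K : fieldType) (f : ('I_3 -> K) -> K) (phi : ('I_3 -> K) -> 'I_3 -> K) :
  (forall i, pf (fun v => phi v i)) -> pf f -> pf (fun v => f (phi v)).
Proof.
move=> hphi; apply: (@pf_ind K (fun f => pf (fun v => f (phi v)))) => //.
- by move=> c; apply: pf_const.
- by move=> f1 g1 _ _; apply: pf_add.
- by move=> f1 g1 _ _; apply: pf_mul.
Qed.

Lemma pf_mkpt (K : fieldType) (a b c : ('I_3 -> K) -> K) :
  pf a -> pf b -> pf c -> forall i, pf (fun v => mkpt (a v) (b v) (c v) i).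
Proof.
move=> ha hb hc i; case: (ord3_cases i) => [->|[->|->]] //.
Qed.

Definition upf (K : fieldType) (f : K -> K) := exists q : {poly K}, forall t, f t = q.[t].

Lemma pf_curve (K : fieldType) (f : ('I_3 -> K) -> K) (c : K -> 'I_3 -> K) :
  (forall i, upf (fun t => c t i)) -> pf f -> upf (fun t => f (c t)).
Proof.
move=> hc; apply: (@pf_ind K (fun f => upf (fun t => f (c t)))) => //.
- by move=> a; exists a%:P => t; rewrite hornerC.
- by move=> f1 g1 _ _ [p Hp] [q Hq]; exists (p + q) => t; rewrite hornerD Hp Hq.
- by move=> f1 g1 _ _ [p Hp] [q Hq]; exists (p * q) => t; rewrite hornerM Hp Hq.
Qed.

Lemma upf_const (K : fieldType) (a : K) : upf (fun _ => a).
Proof. by exists a%:P => t; rewrite hornerC. Qed.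
Lemma upf_id (K : fieldType) : upf (fun t : K => t).
Proof. by exists 'X => t; rewrite hornerX. Qed.
Lemma upf_add (K : fieldType) (f g : K -> K) : upf f -> upf g -> upf (fun t => f t + g t).
Proof. by move=> [p Hp] [q Hq]; exists (p + q) => t; rewrite hornerD Hp Hq. Qed.
Lemma upf_mul (K : fieldType) (f g : K -> K) : upf f -> upf g -> upf (fun t => f t * g t).
Proof. by move=> [p Hp] [q Hq]; exists (p * q) => t; rewrite hornerM Hp Hq. Qed.
Lemma upf_exp (K : fieldType) (f : K -> K) k : upf f -> upf (fun t => f t ^+ k).
Proof. by move=> [p Hp]; exists (p ^+ k) => t; rewrite horner_exp Hp. Qed.

Lemma natf_inj (K : fieldType) (charK : [pchar K] =i pred0) (i j : nat) :
  i%:R = j%:R :> K -> i = j.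
Proof.
wlog hij : i j / (i <= j)%N.
  move=> H E; case/orP: (leq_total i j) => h; first exact: H.
  by apply/esym/H.
move=> E; apply/eqP; rewrite eqn_leq hij /=.
apply/negP => /negP; rewrite -ltnNge => lt.
have : (j - i)%:R != 0 :> K by apply: (natf_nz charK); rewrite subn_gt0.
by rewrite (natrB _ hij) E subrr eqxx.
Qed.

Lemma poly_zero_nz (K : fieldType) (charK : [pchar K] =i pred0) (q : {poly K}) :
  (forall t, t != 0 -> q.[t] = 0) -> q = 0.
Proof.
move=> hq; apply/eqP; apply/negPn/negP => qn0.
pose rs := [seq (i.+1)%:R : K | i <- iota 0 (size q)].
have Hall : all (root q) rs.
  apply/allP => x /mapP [i _ ->]; apply/rootP/hq.
  exact: (natf_nz charK (ltn0Sn i)).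
have Huniq : uniq rs.
  rewrite map_inj_uniq ?iota_uniq // => i j E.
  by have := natf_inj charK E => -[].
have := max_poly_roots qn0 Hall Huniq.
by rewrite size_map size_iota ltnn.
Qed.

Lemma upf_dens (K : fieldType) (charK : [pchar K] =i pred0) (f : K -> K) :
  upf f -> (forall t, t != 0 -> f t = 0) -> forall t, f t = 0.
Proof.
move=> [q Hq] hf t; rewrite Hq (@poly_zero_nz K charK q) ?horner0 // => s /hf.
by rewrite Hq.
Qed.

Definition setc (K : fieldType) (i : 'I_3) (v : 'I_3 -> K) : 'I_3 -> K :=
  fun j => if j == i then 0 else v j.

Lemma pf_setc (K : fieldType) i j : pf (fun v : 'I_3 -> K => setc i v j).
Proof. by rewrite /setc; case: eqP => _; [apply: pf_const|apply: pf_coord]. Qed.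

Lemma dec (K : fieldType) (i : 'I_3) (f : ('I_3 -> K) -> K) :
  pf f -> exists g, pf g /\ forall v, f v = f (setc i v) + v i * g v.
Proof.
move=> hf.
suff : pf f /\ exists g, pf g /\ forall v, f v = f (setc i v) + v i * g v by case.
move: f hf.
apply: (@pf_ind K (fun f => pf f /\ exists g, pf g /\ forall v, f v = f (setc i v) + v i * g v)).
- move=> c; split; first exact: pf_const.
  by exists (fun _ => 0); split; [apply: pf_const|move=> v; rewrite mulr0 addr0].
- move=> j; split; first exact: pf_coord.
  rewrite /setc; case: (eqVneq j i) => [->|ji].
  + by exists (fun _ => 1); split; [apply: pf_const|move=> v /=; rewrite add0r mulr1].
  + by exists (fun _ => 0); split; [apply: pf_const|move=> v /=; rewrite mulr0 addr0].
- move=> f g _ _ [hf [f1 [hf1 Ef]]] [hg [g1 [hg1 Eg]]]; split; first exact: pf_add.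
  exists (fun v => f1 v + g1 v); split; first exact: pf_add.
  by move=> v; rewrite {1}Ef {1}Eg; ring.
- move=> f g _ _ [hf [f1 [hf1 Ef]]] [hg [g1 [hg1 Eg]]]; split; first exact: pf_mul.
  have hfs : pf (fun v => f (setc i v)) by apply: pf_comp => // j; apply: pf_setc.
  have hgs : pf (fun v => g (setc i v)) by apply: pf_comp => // j; apply: pf_setc.
  exists (fun v => f1 v * g (setc i v) + f (setc i v) * g1 v + v i * (f1 v * g1 v)).
  split.
    apply: pf_add; first apply: pf_add; try apply: pf_mul => //; try apply: pf_coord.
    exact: pf_mul.
  by move=> v; rewrite {1}Ef {1}Eg; ring.
Qed.


Definition rf (K : fieldType) (P : pred ('I_3 -> K)) (p : {mpoly K[3]}) : Pt P -> K :=
  fun y => p.@[val y].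
Arguments rf {K} P p _.

Lemma reg_rf (K : fieldType) (P : pred ('I_3 -> K)) p : regular (rf P p).
Proof. by exists p. Qed.

Lemma reg_eq (K : fieldType) (P : pred ('I_3 -> K)) (f : Pt P -> K) :
  regular f -> exists p, f = rf P p.
Proof. by move=> [p Hp]; exists p; apply: functional_extensionality. Qed.

Lemma der_chain (K : fieldType) (P : pred ('I_3 -> K)) D :
  is_derivation D -> (forall c x, D (fun _ : Pt P => c) x = 0) ->
  forall p x, D (rf P p) x = dot3 p (val x) (fun i => D (fun y => val y i) x).
Proof.
move=> [hR hA hL] hC p x.
pose d q := D (rf P q) x.
have -> : (fun i => D (fun y : Pt P => val y i) x) = (fun i => d 'X_i).
  apply: functional_extensionality => i; rewrite /d /rf.
  by congr D; apply: functional_extensionality => y; rewrite mevalXU.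
apply: (chain_gen (d := d)).
- move=> c; rewrite /d.
  have -> : rf P c%:MP = (fun _ => c) by apply: functional_extensionality => y; rewrite /rf mevalC.
  exact: hC.
- move=> p1 q1; rewrite /d.
  have -> : rf P (p1 + q1) = (fun y => rf P p1 y + rf P q1 y) by
    apply: functional_extensionality => y; rewrite /rf mevalD.
  by apply: hA; apply: reg_rf.
- move=> p1 q1; rewrite /d.
  have -> : rf P (p1 * q1) = (fun y => rf P p1 y * rf P q1 y) by
    apply: functional_extensionality => y; rewrite /rf mevalM.
  by rewrite hL; try apply: reg_rf.
Qed.

Lemma Kder_const (K : fieldType) (P : pred ('I_3 -> K)) D :
  is_Kderivation D -> forall c x, D (fun _ : Pt P => c) x = 0.
Proof.
move=> [[hR hA hL] hK] c x.
have r1 : regular (fun _ : Pt P => (1 : K)) by exists 1 => y; rewrite meval1.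
have h1 : D (fun _ : Pt P => 1) x = 0.
  have := hL _ _ r1 r1 x; rewrite /=.
  have -> : (fun _ : Pt P => (1 : K) * 1) = (fun _ => 1) by
    apply: functional_extensionality => y; rewrite mulr1.
  rewrite mul1r mulr1 => E; apply: (addrI (D (fun _ => 1) x)); by rewrite addr0 -E.
have := hK c _ r1 x; rewrite h1 mulr0.
have -> : (fun _ : Pt P => c * 1) = (fun _ => c) by
  apply: functional_extensionality => y; rewrite mulr1.
by [].
Qed.

Lemma curve_chain (K : fieldType) (h : {mpoly K[3]}) (c : 'I_3 -> {poly K}) :
  exists H : {poly K}, (forall t, H.[t] = h.@[fun i => (c i).[t]]) /\
    forall t, H^`().[t] = dot3 h (fun i => (c i).[t]) (fun i => (c i)^`().[t]).
Proof.
elim/mpoly_gen_ind: h.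
- move=> a; exists a%:P; split => t; first by rewrite hornerC mevalC.
  by rewrite derivC horner0 /dot3 !mderivC !meval0; ring.
- move=> i; exists (c i); split => t; first by rewrite mevalXU.
  rewrite /dot3 !mderivXU !mevalC.
  by case: (ord3_cases i) => [->|[->|->]]; rewrite !eqxx /=; ring.
- move=> p q [P [HP1 HP2]] [Q [HQ1 HQ2]]; exists (P + Q); split => t.
    by rewrite hornerD HP1 HQ1 mevalD.
  by rewrite derivD hornerD HP2 HQ2 /dot3 !mderivD !mevalD; ring.
- move=> p q [P [HP1 HP2]] [Q [HQ1 HQ2]]; exists (P * Q); split => t.
    by rewrite hornerM HP1 HQ1 mevalM.
  by rewrite derivM hornerD !hornerM HP1 HQ1 HP2 HQ2 /dot3 !mderivM !mevalD !mevalM; ring.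
Qed.

Lemma mkpt_eta (K : Type) (v : 'I_3 -> K) : v = mkpt (v i0) (v i1) (v i2).
Proof.
apply: functional_extensionality => i.
by case: (ord3_cases i) => [->|[->|->]].
Qed.

Lemma dens_curve (K : fieldType) (charK : [pchar K] =i pred0) (e : nat)
  (u : ('I_3 -> K) -> K) (cv : K -> 'I_3 -> K) :
  pf u -> (forall v, onS' e v -> v i0 != 0 -> u v = 0) ->
  (forall i, upf (fun t => cv t i)) -> (forall t, onS' e (cv t)) ->
  (forall t, cv t i0 = t) -> u (cv 0) = 0.
Proof.
move=> hu hv hc hS h0.
apply: (upf_dens charK (f := fun t => u (cv t))); first exact: pf_curve.
by move=> t tn0; apply: hv => //; rewrite h0.
Qed.

Lemma dens' (K : fieldType) (charK : [pchar K] =i pred0) (e : nat) (e0 : (0 < e)%N)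
  (u : ('I_3 -> K) -> K) :
  pf u -> (forall v, onS' e v -> v i0 != 0 -> u v = 0) ->
  forall v, onS' e v -> u v = 0.
Proof.
move=> hu hv v hS.
have [a0|] := eqVneq (v i0) 0; last exact: hv.
have n4 : (4 : K) != 0 by apply: (natf_nz charK).
have n2 : (2 : K) != 0 by apply: (natf_nz charK).
have bc : v i1 * v i2 = 0.
  move: hS; rewrite /onS' a0 expr0n muln_eq0 /= (gtn_eqF e0) /= sub0r oppr_eq0 => /eqP.
  by rewrite -mulrA => /eqP; rewrite mulf_eq0 (negbTE n4) /= => /eqP.
have -> : v = mkpt 0 (v i1) (v i2) by rewrite {1}(mkpt_eta v) a0.
have upf2 : forall k (c : K), upf (fun t : K => t ^+ k / c).
  by move=> k c; exact: (upf_mul (upf_exp k (@upf_id K)) (upf_const _)).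
have [b0|bn0] := eqVneq (v i1) 0.
- have [c0|cn0] := eqVneq (v i2) 0.
  + rewrite b0 c0.
    pose cv (t : K) := mkpt t (t ^+ e / 2) (t ^+ e / 2).
    have <- : cv 0 = mkpt 0 0 0 by rewrite /cv expr0n (gtn_eqF e0) mul0r.
    apply: (dens_curve charK hu hv) => [i|t|t] //.
    * by rewrite /cv; case: (ord3_cases i) => [->|[->|->]] /=; [apply: upf_id|apply: upf2|apply: upf2].
    * rewrite /onS' /cv /mkpt /=; apply/eqP; rewrite mulnC exprM; field.
      exact: n2.
  + pose cv (t : K) := mkpt t (t ^+ (2 * e) / (4 * v i2)) (v i2).
    have <- : cv 0 = mkpt 0 (v i1) (v i2).
      by rewrite /cv b0 expr0n muln_eq0 /= (gtn_eqF e0) mul0r.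
    apply: (dens_curve charK hu hv) => [i|t|t] //.
    * by rewrite /cv; case: (ord3_cases i) => [->|[->|->]] /=; [apply: upf_id|apply: upf2|apply: upf_const].
    * rewrite /onS' /cv /mkpt /=; apply/eqP; field.
      by rewrite ?n4 ?cn0 ?bn0.
- have c0 : v i2 = 0 by move: bc => /eqP; rewrite mulf_eq0 (negbTE bn0) => /eqP.
  pose cv (t : K) := mkpt t (v i1) (t ^+ (2 * e) / (4 * v i1)).
  have <- : cv 0 = mkpt 0 (v i1) (v i2).
    by rewrite /cv c0 expr0n muln_eq0 /= (gtn_eqF e0) mul0r.
  apply: (dens_curve charK hu hv) => [i|t|t] //.
  * by rewrite /cv; case: (ord3_cases i) => [->|[->|->]] /=; [apply: upf_id|apply: upf_const|apply: upf2].
  * rewrite /onS' /cv /mkpt /=; apply/eqP; field.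
    by rewrite ?n4 ?cn0 ?bn0.
Qed.


Ltac ord3 := let j := fresh "j" in
  apply: functional_extensionality => j;
  case: (ord3_cases j) => [->|[->|->]]; rewrite /setc /mkpt /=.

Ltac pfauto := repeat first [assumption | apply: pf_const | apply: pf_coord |
  apply: pf_add | apply: pf_mul | apply: pf_opp | apply: pf_exp].

Lemma onS'E (K : fieldType) e (v : 'I_3 -> K) :
  onS' e v -> v i0 ^+ (2 * e) = 4 * v i1 * v i2.
Proof. by rewrite /onS' subr_eq0 => /eqP. Qed.

Lemma onS'_0b0 (K : fieldType) e (e0 : (0 < e)%N) (t : K) : onS' e (mkpt 0 t 0).
Proof. by rewrite /onS' /mkpt /= expr0n muln_eq0 /= (gtn_eqF e0) !mulr0 subr0. Qed.

Lemma onS'_00c (K : fieldType) e (e0 : (0 < e)%N) (t : K) : onS' e (mkpt 0 0 t).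
Proof. by rewrite /onS' /mkpt /= expr0n muln_eq0 /= (gtn_eqF e0) !mulr0 mul0r subr0. Qed.

Lemma divA (K : fieldType) (charK : [pchar K] =i pred0) e (e0 : (0 < e)%N)
  (w : ('I_3 -> K) -> K) : pf w ->
  (forall v, onS' e v -> v i0 = 0 -> w v = 0) ->
  exists q, pf q /\ forall v, onS' e v -> w v = v i0 * q v.
Proof.
move=> hw hz.
have [W1 [hW1 EW1]] := dec i0 hw.
pose r v := w (setc i0 v).
have hr : pf r by apply: pf_comp => // j; apply: pf_setc.
have [R1 [hR1 ER1]] := dec i1 hr.
pose R1' v := R1 (setc i0 v).
have hR1' : pf R1' by apply: pf_comp => // j; apply: pf_setc.
have [R2 [hR2 ER2]] := dec i2 hR1'.
have c1 : forall v, r (setc i1 (setc i0 v)) = 0.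
  move=> v; rewrite /r; apply: hz; last by rewrite /setc.
  have -> : setc i0 (setc i1 (setc i0 v)) = mkpt 0 0 (v i2) by ord3.
  exact: onS'_00c.
have c2 : forall v, r v = v i1 * R1' v.
  move=> v; have -> : r v = r (setc i0 v).
    by rewrite /r; congr w; ord3.
  by rewrite ER1 c1 add0r.
have c3 : forall t, R1 (mkpt 0 t 0) = 0.
  apply: (upf_dens charK (f := fun t => R1 (mkpt 0 t 0))).
    apply: pf_curve => // i; case: (ord3_cases i) => [->|[->|->]] /=;
      [apply: upf_const|apply: upf_id|apply: upf_const].
  move=> t tn0; have := c2 (mkpt 0 t 0).
  have -> : r (mkpt 0 t 0) = 0.
    rewrite /r hz //; first by rewrite (_ : setc _ _ = mkpt 0 t 0); [apply: onS'_0b0|ord3].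
  rewrite /R1' (_ : setc i0 (mkpt 0 t 0) = mkpt 0 t 0); last by ord3.
  move/esym/eqP; rewrite mulf_eq0 (negbTE tn0) /= => /eqP; exact.
have c4 : forall v, R1' v = v i2 * R2 v.
  move=> v; rewrite ER2 {1}/R1'.
  rewrite (_ : setc i0 (setc i2 v) = mkpt 0 (v i1) 0); last by ord3.
  by rewrite c3 add0r.
pose n := (2 * e).-1.
have En : (2 * e = n.+1)%N by rewrite /n prednK // muln_gt0.
exists (fun v => W1 v + v i0 ^+ n / 4 * R2 v); split.
  apply: pf_add => //; apply: pf_mul => //; apply: pf_mul; [apply: pf_exp; apply: pf_coord|apply: pf_const].
move=> v hv.
have n4 : (4 : K) != 0 by apply: (natf_nz charK).
have := onS'E hv; rewrite En exprS => E.
rewrite EW1 /= -/(r v) c2 c4.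
have -> : v i1 * (v i2 * R2 v) = (4 * v i1 * v i2) / 4 * R2 v by field; rewrite ?n4.
rewrite -E; field; by rewrite ?n4.
Qed.

Lemma pf_Fmap (K : fieldType) i : pf (fun v : 'I_3 -> K => Fmap v i).
Proof.
rewrite /Fmap; apply: pf_mkpt.
- by apply: pf_exp; apply: pf_coord.
- by apply: pf_add; apply: pf_coord.
- by apply: pf_mul; [apply: pf_coord|apply: pf_sub; apply: pf_coord].
Qed.

Lemma construct_V (K : fieldType) (charK : [pchar K] =i pred0) e (e0 : (0 < e)%N)
  (P0 P1 P2 : ('I_3 -> K) -> K) : pf P0 -> pf P1 -> pf P2 ->
  (forall y, onS e y -> ((e.+1)%:R * y i0 ^+ e - y i1 ^+ 2) * P0 y
        - 2 * y i0 * y i1 * P1 y + 2 * y i2 * P2 y = 0) ->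
  exists VA VB VC : ('I_3 -> K) -> K, [/\ pf VA, pf VB, pf VC &
   forall v, onS' e v ->
   [/\ 2 * v i0 * VA v = P0 (Fmap v), VB v + VC v = P1 (Fmap v),
       v i0 * (VB v - VC v) + (v i1 - v i2) * VA v = P2 (Fmap v) &
       (2 * e)%:R * v i0 ^+ (2 * e).-1 * VA v - 4 * v i2 * VB v - 4 * v i1 * VC v = 0]].
Proof.
move=> hP0 hP1 hP2 T.
have n4 : (4 : K) != 0 by apply: (natf_nz charK).
have n2 : (2 : K) != 0 by apply: (natf_nz charK).
pose n := (2 * e).-1.
have En : (2 * e = n.+1)%N by rewrite /n prednK // muln_gt0.
have E2 : forall x : K, (x ^+ 2) ^+ e = x * x ^+ n by move=> x; rewrite -exprM En exprS.
have Ee0 : (0 : K) ^+ e = 0 by rewrite expr0n (gtn_eqF e0).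
have ha : forall t, P0 (mkpt 0 t 0) = 0.
  apply: (upf_dens charK (f := fun t => P0 (mkpt 0 t 0))).
    apply: pf_curve => // i; case: (ord3_cases i) => [->|[->|->]] /=;
      [apply: upf_const|apply: upf_id|apply: upf_const].
  move=> t tn0; have := T (mkpt 0 t 0).
  rewrite /mkpt /= Ee0 !mulr0 !mul0r subr0 addr0 sub0r.
  have -> : onS e (mkpt 0 t 0) by rewrite /onS /mkpt /= Ee0 !mulr0 expr0n addr0.
  move=> /(_ isT) /eqP; rewrite mulf_eq0 oppr_eq0 expf_eq0 (negbTE tn0) andbF /=.
  by move/eqP.
pose Q0 v := P0 (Fmap v); pose Q1 v := P1 (Fmap v); pose Q2 v := P2 (Fmap v).
have hQ0 : pf Q0 by apply: pf_comp => // i; apply: pf_Fmap.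
have hQ1 : pf Q1 by apply: pf_comp => // i; apply: pf_Fmap.
have hQ2 : pf Q2 by apply: pf_comp => // i; apply: pf_Fmap.
have [q0 [hq0 Eq0]] : exists q, pf q /\ forall v, onS' e v -> Q0 v = v i0 * q v.
  apply: (divA charK e0 hQ0) => v hv a0.
  rewrite /Q0 (_ : Fmap v = mkpt 0 (v i1 + v i2) 0) ?ha //.
  by rewrite /Fmap a0 expr0n mul0r.
pose VA v := q0 v / 2.
have hVA : pf VA by apply: pf_mul => //; apply: pf_const.
have EVA : forall v, onS' e v -> 2 * v i0 * VA v = Q0 v.
  by move=> v hv; rewrite Eq0 // /VA; field.
pose Z v := VA v * ((e.+1)%:R * (v i0 * v i0 ^+ n) - (v i1 + v i2) ^+ 2)
   - v i0 * (v i1 + v i2) * Q1 v + (v i1 - v i2) * Q2 v.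
have hZ : pf Z.
  rewrite /Z; pfauto.
have EZ : forall v, onS' e v -> Z v = 0.
  apply: (dens' charK e0 hZ) => v hv a0.
  have := T _ (Fmap_onS hv); rewrite /Fmap /mkpt /= E2 -/(Fmap v) -/(Q0 v) -/(Q1 v) -/(Q2 v).
  rewrite -EVA // => H.
  have : 2 * v i0 * Z v = 0 by rewrite -H /Z; ring.
  by move/eqP; rewrite !mulf_eq0 (negbTE n2) (negbTE a0) /= => /eqP.
pose w v := Q2 v - (v i1 - v i2) * VA v.
have hw : pf w.
  rewrite /w; pfauto.
have Cw1 : forall v, onS' e v -> v i0 = 0 -> v i1 - v i2 != 0 -> w v = 0.
  move=> v hv a0 dn0.
  have bc : v i1 * v i2 = 0.
    have := onS'E hv; rewrite a0 expr0n muln_eq0 (gtn_eqF e0) /= => /esym/eqP.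
    by rewrite -mulrA mulf_eq0 (negbTE n4) /= => /eqP.
  have := EZ v hv; rewrite /Z a0 => H.
  have : (v i1 - v i2) * w v = 0.
    rewrite -H /w; have : (v i1 + v i2) ^+ 2 = (v i1 - v i2) ^+ 2 + 4 * (v i1 * v i2) by ring.
    rewrite bc mulr0 addr0 => ->; ring.
  by move/eqP; rewrite mulf_eq0 (negbTE dn0) /= => /eqP.
have [q2 [hq2 Eq2]] : exists q, pf q /\ forall v, onS' e v -> w v = v i0 * q v.
  apply: (divA charK e0 hw) => v hv a0.
  have [dn0|d0] := eqVneq (v i1 - v i2) 0; last exact: Cw1.
  have bc : v i1 * v i2 = 0.
    have := onS'E hv; rewrite a0 expr0n muln_eq0 (gtn_eqF e0) /= => /esym/eqP.
    by rewrite -mulrA mulf_eq0 (negbTE n4) /= => /eqP.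
  move/eqP: dn0; rewrite subr_eq0 => /eqP bc'.
  have b0 : v i1 = 0 by move: bc; rewrite bc' => /eqP; rewrite mulf_eq0 orbb => /eqP.
  have -> : v = mkpt 0 0 0 by rewrite {1}(mkpt_eta v) a0 -bc' b0.
  apply: (upf_dens charK (f := fun t => w (mkpt 0 t 0))).
    apply: pf_curve => // i; case: (ord3_cases i) => [->|[->|->]] /=;
      [apply: upf_const|apply: upf_id|apply: upf_const].
  move=> t tn0; apply: Cw1; [exact: onS'_0b0|by []|by rewrite /mkpt /= subr0].
pose VB v := (Q1 v + q2 v) / 2.
pose VC v := (Q1 v - q2 v) / 2.
have hVB : pf VB by rewrite /VB; pfauto.
have hVC : pf VC by rewrite /VC; pfauto.
pose X v := (2 * e)%:R * v i0 ^+ n * VA v - 4 * v i2 * VB v - 4 * v i1 * VC v.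
have hX : pf X by rewrite /X; pfauto.
have EX : forall v, onS' e v -> X v = 0.
  apply: (dens' charK e0 hX) => v hv a0.
  have HZ := EZ v hv.
  have := onS'E hv; rewrite En exprS => E.
  have Hw := Eq2 v hv; rewrite /w in Hw.
  have key : v i0 * X v = 2 * Z v + 2 * VA v * (4 * v i1 * v i2 - v i0 * v i0 ^+ n)
      + 2 * (v i1 - v i2) * (v i0 * q2 v - (Q2 v - (v i1 - v i2) * VA v)).
    rewrite /Z /X /VB /VC -addn1 natrD natrM; field; by rewrite ?n2.
  move: key; rewrite HZ -E -Hw !subrr !mulr0 !addr0 => /eqP.
  by rewrite mulf_eq0 (negbTE a0) /= => /eqP.
exists VA, VB, VC; split => //.
move=> v hv; rewrite -/(Q0 v) -/(Q1 v) -/(Q2 v); split.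
- exact: EVA.
- by rewrite /VB /VC; field; rewrite ?n2. rewrite ?n2.
- have := Eq2 v hv; rewrite /w => H.
  have -> : v i0 * (VB v - VC v) = v i0 * q2 v by rewrite /VB /VC; field; rewrite ?n2.
  by rewrite -H; ring.
- exact: EX.
Qed.


Definition Dp (K : fieldType) (vA vB vC p : {mpoly K[3]}) (v : 'I_3 -> K) : K :=
  dot3 p v (mkpt vA.@[v] vB.@[v] vC.@[v]).

Definition tangent (K : fieldType) e (vA vB vC : {mpoly K[3]}) :=
  forall v, onS' e v -> (2 * e)%:R * v i0 ^+ (2 * e).-1 * vA.@[v]
     - 4 * v i2 * vB.@[v] - 4 * v i1 * vC.@[v] = 0.

Lemma pf_meval (K : fieldType) (p : {mpoly K[3]}) : pf (fun v => p.@[v]).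
Proof. by exists p. Qed.

Lemma pf_Dp (K : fieldType) (vA vB vC p : {mpoly K[3]}) : pf (Dp vA vB vC p).
Proof.
exists ((mderiv i0 p) * vA + (mderiv i1 p) * vB + (mderiv i2 p) * vC) => v.
by rewrite /Dp /dot3 !mevalD !mevalM.
Qed.

Lemma curve_zero (K : fieldType) (charK : [pchar K] =i pred0) e (h : {mpoly K[3]})
  (c : 'I_3 -> {poly K}) :
  (forall v, onS' e v -> h.@[v] = 0) -> (forall t, onS' e (fun i => (c i).[t])) ->
  forall t, dot3 h (fun i => (c i).[t]) (fun i => (c i)^`().[t]) = 0.
Proof.
move=> hh hc t.
have [H [H1 H2]] := curve_chain h c.
have H0 : H = 0 by apply: (poly_zero_nz charK) => s _; rewrite H1 hh.
by rewrite -H2 H0 deriv0 horner0.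
Qed.

Lemma W_lemma (K : fieldType) (charK : [pchar K] =i pred0) e (e0 : (0 < e)%N)
  (vA vB vC : {mpoly K[3]}) : tangent e vA vB vC ->
  forall h : {mpoly K[3]}, (forall v, onS' e v -> h.@[v] = 0) ->
  forall v, onS' e v -> Dp vA vB vC h v = 0.
Proof.
move=> htan h hh; apply: (dens' charK e0 (pf_Dp _ _ _ _)) => v hv a0.
have n4 : (4 : K) != 0 by apply: (natf_nz charK).
pose n := (2 * e).-1.
have En : (2 * e = n.+1)%N by rewrite /n prednK // muln_gt0.
have E := onS'E hv.
have bc0 : v i1 * v i2 != 0.
  apply/eqP => bc; move: E; rewrite -mulrA bc mulr0 => /eqP; rewrite expf_eq0 (negbTE a0).
  by rewrite andbF.
have b0 : v i1 != 0 by move: bc0; rewrite mulf_eq0 negb_or => /andP [].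
have c0 : v i2 != 0 by move: bc0; rewrite mulf_eq0 negb_or => /andP [].
have kn0 : (2 * e)%:R * v i0 ^+ n != 0.
  by rewrite mulf_eq0 negb_or (natf_nz charK) ?muln_gt0 //= expf_eq0 (negbTE a0) andbF.
pose c1 := fun i => mkpt 'X (v i1)%:P ((4 * v i1)^-1 *: 'X^(2 * e)) i.
have hc1 : forall t, onS' e (fun i => (c1 i).[t]).
  move=> t; rewrite /onS' /c1 /mkpt /= hornerX hornerC hornerZ hornerXn.
  by apply/eqP; field; rewrite ?n4 ?b0.
have := curve_zero charK hh hc1 (v i0).
have -> : (fun i => (c1 i).[v i0]) = v.
  apply: functional_extensionality => j; rewrite /c1.
  case: (ord3_cases j) => [->|[->|->]]; rewrite /mkpt /= ?hornerX ?hornerC //.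
  rewrite hornerZ hornerXn E; field; by rewrite ?n4 ?b0.
rewrite /dot3 /c1 /mkpt /= derivX derivC derivZ derivXn !hornerE -/n.
move=> eq1.
pose c2 := fun i => mkpt 'X ((4 * v i2)^-1 *: 'X^(2 * e)) (v i2)%:P i.
have hc2 : forall t, onS' e (fun i => (c2 i).[t]).
  move=> t; rewrite /onS' /c2 /mkpt /= hornerX hornerC hornerZ hornerXn.
  by apply/eqP; field; rewrite ?n4 ?c0.
have := curve_zero charK hh hc2 (v i0).
have -> : (fun i => (c2 i).[v i0]) = v.
  apply: functional_extensionality => j; rewrite /c2.
  case: (ord3_cases j) => [->|[->|->]]; rewrite /mkpt /= ?hornerX ?hornerC //.
  rewrite hornerZ hornerXn E; field; by rewrite ?n4 ?c0.
rewrite /dot3 /c2 /mkpt /= derivX derivC derivZ derivXn !hornerE -/n.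
move=> eq2.
have T := htan v hv; rewrite -/n in T.
rewrite /Dp /dot3 /mkpt /=.
move: eq1 eq2; rewrite !hornerMn !hornerXn -!(mulr_natl (_ ^+ n) (2 * e)) => eq1 eq2.
set h0 := (h^`M(i0)).@[v] in eq1 eq2 *.
set h1 := (h^`M(i1)).@[v] in eq1 eq2 *.
set h2 := (h^`M(i2)).@[v] in eq1 eq2 *.
set k := (2 * e)%:R * v i0 ^+ n in kn0 T *.
rewrite -/k in eq1 eq2.
have key : k * (h0 * vA.@[v] + h1 * vB.@[v] + h2 * vC.@[v]) =
  h0 * (k * vA.@[v] - 4 * v i2 * vB.@[v] - 4 * v i1 * vC.@[v])
  + 4 * v i2 * vB.@[v] * (h0 + h1 * (4 * v i2)^-1 * k)
  + 4 * v i1 * vC.@[v] * (h0 + h2 * (4 * v i1)^-1 * k).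
  by field; rewrite ?n4 ?b0 ?c0.
move: key; rewrite T eq1 eq2 !mulr0 !addr0 => /eqP.
by rewrite mulf_eq0 (negbTE kn0) /= => /eqP.
Qed.

Definition rep (K : fieldType) (P : pred ('I_3 -> K)) (f : Pt P -> K) : {mpoly K[3]} :=
  epsilon (inhabits 0) (fun p => forall x, f x = p.@[val x]).

Lemma rep_spec (K : fieldType) (P : pred ('I_3 -> K)) (f : Pt P -> K) :
  regular f -> forall x, f x = (rep f).@[val x].
Proof. by move=> hf; apply: (epsilon_spec (inhabits 0) (fun p => forall x, f x = p.@[val x])). Qed.

Definition Dprime (K : fieldType) e (vA vB vC : {mpoly K[3]})
  (f : Pt (onS' e) -> K) (x : Pt (onS' e)) : K := Dp vA vB vC (rep f) (val x).
Arguments Dprime {K} e vA vB vC f x.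

Lemma Dp_add (K : fieldType) (vA vB vC p q : {mpoly K[3]}) v :
  Dp vA vB vC (p + q) v = Dp vA vB vC p v + Dp vA vB vC q v.
Proof. by rewrite /Dp /dot3 !mderivD !mevalD; ring. Qed.
Lemma Dp_sub (K : fieldType) (vA vB vC p q : {mpoly K[3]}) v :
  Dp vA vB vC (p - q) v = Dp vA vB vC p v - Dp vA vB vC q v.
Proof. by rewrite /Dp /dot3 !mderivB !mevalB; ring. Qed.
Lemma Dp_mul (K : fieldType) (vA vB vC p q : {mpoly K[3]}) v :
  Dp vA vB vC (p * q) v = p.@[v] * Dp vA vB vC q v + Dp vA vB vC p v * q.@[v].
Proof. by rewrite /Dp /dot3 !mderivM !mevalD !mevalM; ring. Qed.
Lemma Dp_C (K : fieldType) (vA vB vC : {mpoly K[3]}) c v :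
  Dp vA vB vC c%:MP v = 0.
Proof. by rewrite /Dp /dot3 !mderivC !meval0; ring. Qed.
Lemma Dp_X (K : fieldType) (vA vB vC : {mpoly K[3]}) i v :
  Dp vA vB vC 'X_i v = mkpt vA.@[v] vB.@[v] vC.@[v] i.
Proof.
rewrite /Dp /dot3 !mderivXU !mevalC.
by case: (ord3_cases i) => [->|[->|->]]; rewrite !eqxx /=; ring.
Qed.

Lemma Dprime_rf (K : fieldType) (charK : [pchar K] =i pred0) e (e0 : (0 < e)%N)
  (vA vB vC : {mpoly K[3]}) : tangent e vA vB vC ->
  forall p x, Dprime e vA vB vC (rf (onS' e) p) x = Dp vA vB vC p (val x).
Proof.
move=> ht p x; rewrite /Dprime.
have hr := rep_spec (reg_rf (onS' e) p).
apply/eqP; rewrite -subr_eq0 -Dp_sub; apply/eqP.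
apply: (W_lemma charK e0 ht); last exact: (valP x).
move=> v hv; rewrite mevalB.
by have := hr (exist _ v hv); rewrite /rf /= => <-; rewrite subrr.
Qed.

Lemma Dprime_der (K : fieldType) (charK : [pchar K] =i pred0) e (e0 : (0 < e)%N)
  (vA vB vC : {mpoly K[3]}) : tangent e vA vB vC ->
  is_derivation (Dprime e vA vB vC).
Proof.
move=> ht; split.
- move=> f /reg_eq [p ->].
  exists ((mderiv i0 p) * vA + (mderiv i1 p) * vB + (mderiv i2 p) * vC) => x.
  by rewrite (Dprime_rf charK e0 ht) /Dp /dot3 !mevalD !mevalM.
- move=> f g /reg_eq [p ->] /reg_eq [q ->] x.
  have -> : (fun y => rf (onS' e) p y + rf (onS' e) q y) = rf (onS' e) (p + q).
    by apply: functional_extensionality => y; rewrite /rf mevalD.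
  by rewrite !(Dprime_rf charK e0 ht) Dp_add.
- move=> f g /reg_eq [p ->] /reg_eq [q ->] x.
  have -> : (fun y => rf (onS' e) p y * rf (onS' e) q y) = rf (onS' e) (p * q).
    by apply: functional_extensionality => y; rewrite /rf mevalM.
  by rewrite !(Dprime_rf charK e0 ht) Dp_mul.
Qed.

Lemma Dprime_const (K : fieldType) (charK : [pchar K] =i pred0) e (e0 : (0 < e)%N)
  (vA vB vC : {mpoly K[3]}) : tangent e vA vB vC ->
  forall c x, Dprime e vA vB vC (fun _ => c) x = 0.
Proof.
move=> ht c x.
have -> : (fun _ : Pt (onS' e) => c) = rf (onS' e) c%:MP.
  by apply: functional_extensionality => y; rewrite /rf mevalC.
by rewrite (Dprime_rf charK e0 ht) Dp_C.
Qed.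

Lemma Dprime_coord (K : fieldType) (charK : [pchar K] =i pred0) e (e0 : (0 < e)%N)
  (vA vB vC : {mpoly K[3]}) : tangent e vA vB vC ->
  forall i x, Dprime e vA vB vC (fun y => val y i) x = mkpt vA.@[val x] vB.@[val x] vC.@[val x] i.
Proof.
move=> ht i x.
have -> : (fun y : Pt (onS' e) => val y i) = rf (onS' e) ('X_i : {mpoly K[3]}).
  by apply: functional_extensionality => y; rewrite /rf mevalXU.
by rewrite (Dprime_rf charK e0 ht) Dp_X.
Qed.

Lemma der_unique (K : fieldType) e (D1 D2 : (Pt (onS' e) -> K) -> (Pt (onS' e) -> K)) :
  is_derivation D1 -> is_derivation D2 ->
  (forall c x, D1 (fun _ : Pt (onS' e) => c) x = 0) ->
  (forall c x, D2 (fun _ : Pt (onS' e) => c) x = 0) ->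
  (forall i x, D1 (fun y => val y i) x = D2 (fun y => val y i) x) ->
  forall f, regular f -> forall x, D1 f x = D2 f x.
Proof.
move=> h1 h2 c1 c2 hc f /reg_eq [p ->] x.
rewrite (der_chain h1 c1) (der_chain h2 c2).
have -> : (fun i => D1 (fun y => val y i) x) = (fun i => D2 (fun y => val y i) x).
  by apply: functional_extensionality => i; apply: hc.
by [].
Qed.


Definition G0 (K : fieldType) : {mpoly K[3]} := 'X_i0 * 'X_i0.
Definition G1 (K : fieldType) : {mpoly K[3]} := 'X_i1 + 'X_i2.
Definition G2 (K : fieldType) : {mpoly K[3]} := 'X_i0 * ('X_i1 - 'X_i2).

Lemma dot3_G0 (K : fieldType) v d : dot3 (G0 K) v d = 2 * v i0 * d i0.
Proof. by rewrite /dot3 /G0 !mderivM !mderivXU !mevalD !mevalM !mevalC !mevalXU /=; ring. Qed.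
Lemma dot3_G1 (K : fieldType) v d : dot3 (G1 K) v d = d i1 + d i2.
Proof. by rewrite /dot3 /G1 !mderivD !mderivXU !mevalD !mevalC /=; ring. Qed.
Lemma dot3_G2 (K : fieldType) v d :
  dot3 (G2 K) v d = v i0 * (d i1 - d i2) + (v i1 - v i2) * d i0.
Proof.
by rewrite /dot3 /G2 !mderivM !mderivB !mderivXU ?mevalD ?mevalN ?mevalM ?mevalD ?mevalN ?mevalM ?mevalC ?mevalXU /=; ring.
Qed.

Lemma FG (K : fieldType) e i :
  (fun y : Pt (onS' e) => (('X_i : {mpoly K[3]}).@[Fmap (val y)])) =
  rf (onS' e) (mkpt (G0 K) (G1 K) (G2 K) i).
Proof.
apply: functional_extensionality => y; rewrite /rf mevalXU.
case: (ord3_cases i) => [->|[->|->]]; rewrite /Fmap /mkpt /G0 /G1 /G2 /=.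
- by rewrite mevalM mevalXU expr2.
- by rewrite mevalD !mevalXU.
- by rewrite mevalM mevalB !mevalXU.
Qed.

Lemma reg_coord (K : fieldType) (P : pred ('I_3 -> K)) i : regular (fun y : Pt P => val y i).
Proof. by exists 'X_i => y; rewrite mevalXU. Qed.

Lemma uniq_ext (K : fieldType) (charK : [pchar K] =i pred0) e (e0 : (0 < e)%N)
  (D : (Pt (onS e) -> K) -> (Pt (onS e) -> K)) (D1 D2 : (Pt (onS' e) -> K) -> (Pt (onS' e) -> K)) :
  is_derivation D1 -> is_derivation D2 ->
  (forall c x, D1 (fun _ => c) x = 0) -> (forall c x, D2 (fun _ => c) x = 0) ->
  extends_along_F D D1 -> extends_along_F D D2 ->
  forall f, regular f -> forall x, D1 f x = D2 f x.
Proof.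
move=> h1 h2 c1 c2 x1 x2.
have n2 : (2 : K) != 0 by apply: (natf_nz charK).
apply: (der_unique h1 h2 c1 c2).
have Gj : forall j x, D1 (rf (onS' e) (mkpt (G0 K) (G1 K) (G2 K) j)) x
                    = D2 (rf (onS' e) (mkpt (G0 K) (G1 K) (G2 K) j)) x.
  move=> j x; rewrite -FG.
  have := x1 _ (reg_rf (onS e) 'X_j) x; have := x2 _ (reg_rf (onS e) 'X_j) x.
  by rewrite /comp /rf /= => -> ->.
have loc : forall x, val x i0 != 0 -> forall i, D1 (fun y => val y i) x = D2 (fun y => val y i) x.
  move=> x a0.
  have E0 := Gj i0 x; have E1 := Gj i1 x; have E2 := Gj i2 x.
  rewrite /mkpt /= !(der_chain h1 c1) !(der_chain h2 c2) in E0 E1 E2.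
  rewrite !dot3_G0 in E0; rewrite !dot3_G1 in E1; rewrite !dot3_G2 in E2.
  move=> i; case: (ord3_cases i) => [->|[->|->]]; move: E0 E1 E2.
  1-3: set p0 := D1 (fun y => val y i0) x; set q0 := D2 (fun y => val y i0) x.
  1-3: set p1 := D1 (fun y => val y i1) x; set q1 := D2 (fun y => val y i1) x.
  1-3: set p2 := D1 (fun y => val y i2) x; set q2 := D2 (fun y => val y i2) x.
  1-3: move=> E0 E1 E2.
  1-3: have e0' : p0 = q0 by
    move: E0 => /eqP; rewrite -subr_eq0 -mulrBr mulf_eq0 mulf_eq0 (negbTE n2) (negbTE a0) subr_eq0 => /eqP; exact.
  1-3: rewrite e0' in E2.
  1-3: have e12 : p1 - p2 = q1 - q2 by
    move: E2 => /addIr /eqP; rewrite -subr_eq0 -mulrBr mulf_eq0 (negbTE a0) /= subr_eq0 => /eqP; exact.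
  1-3: have e1' : p1 = q1 by
    apply: (mulfI n2); rewrite (_ : 2 * p1 = (p1 + p2) + (p1 - p2)); [rewrite E1 e12; ring|ring].
  1-3: have e2' : p2 = q2 by move: E1; rewrite e1' => /addrI.
  1-3: by [].

move=> i x.
have [hr1 _ _] := h1; have [hr2 _ _] := h2.
have [r1 Hr1] := hr1 _ (reg_coord (onS' e) i).
have [r2 Hr2] := hr2 _ (reg_coord (onS' e) i).
rewrite Hr1 Hr2; apply/eqP; rewrite -subr_eq0; apply/eqP.
apply: (dens' charK e0 (u := fun v => r1.@[v] - r2.@[v])); last exact: (valP x).
  by apply: pf_sub; apply: pf_meval.
move=> v hv a0; have := loc (exist _ v hv) a0 i.
by rewrite Hr1 Hr2 /= => ->; rewrite subrr.
Qed.


Lemma Pt_eq (K : fieldType) (P : pred ('I_3 -> K)) (x y : Pt P) : val x = val y -> x = y.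
Proof.
move: x y => [a pa] [b pb] /= E; subst b; congr exist; exact: bool_irrelevance.
Qed.


Lemma meval_exp (K : fieldType) (p : {mpoly K[3]}) k v : (p ^+ k).@[v] = p.@[v] ^+ k.
Proof. exact: rmorphXn. Qed.

Lemma meval_mderiv_exp (K : fieldType) i (p : {mpoly K[3]}) k v :
  (mderiv i (p ^+ k.+1)).@[v] = (k.+1)%:R * p.@[v] ^+ k * (mderiv i p).@[v].
Proof.
elim: k => [|k IH]; first by rewrite expr1 expr0 mul1r mul1r.
rewrite exprS mderivM mevalD !mevalM IH meval_exp.
have -> : (k.+2)%:R = (k.+1)%:R + 1 :> K by rewrite -[(k.+2)%N]addn1 natrD.
rewrite [p.@[v] ^+ k.+1]exprS; ring.
Qed.

Ltac msimp := do 3 (rewrite ?mevalD ?mevalB ?mevalN ?mevalM ?meval_exp ?mevalC ?mevalXU).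

Lemma tanS (K : fieldType) e (e0 : (0 < e)%N) (D : (Pt (onS e) -> K) -> (Pt (onS e) -> K))
  (p0 p1 p2 : {mpoly K[3]}) : is_Kderivation D ->
  (forall y, D (fun z => val z i0) y = p0.@[val y]) ->
  (forall y, D (fun z => val z i1) y = p1.@[val y]) ->
  (forall y, D (fun z => val z i2) y = p2.@[val y]) ->
  forall y, onS e y -> ((e.+1)%:R * y i0 ^+ e - y i1 ^+ 2) * p0.@[y]
        - 2 * y i0 * y i1 * p1.@[y] + 2 * y i2 * p2.@[y] = 0.
Proof.
move=> hD H0 H1 H2 y hy.
pose x : Pt (onS e) := exist _ y hy.
pose gS : {mpoly K[3]} := 'X_i2 ^+ 2 + ('X_i0 ^+ e - 'X_i1 ^+ 2) * 'X_i0.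
have Z : rf (onS e) gS = (fun _ => 0).
  apply: functional_extensionality => z; rewrite /rf /gS.
  msimp; apply/eqP; exact: (valP z).
have := der_chain hD.1 (Kder_const hD) gS x; rewrite Z (Kder_const hD) => E.
move: E; rewrite /dot3 /= H0 H1 H2 /=.
have [m Em] : exists m, e = m.+1 by exists e.-1; rewrite prednK.
rewrite /gS Em !mderivD !mderivM !mderivB.
do 3 (rewrite ?mevalD ?mevalB ?mevalN ?mevalM ?meval_mderiv_exp ?meval_exp ?mevalC ?mevalXU).
rewrite !mderivXU !mevalC /=.
have -> : (m.+2)%:R = (m.+1)%:R + 1 :> K by rewrite -[(m.+2)%N]addn1 natrD.
move=> E; apply: (eq_trans _ (esym E)); rewrite ?exprS; ring.
Qed.


Lemma reg_comp (K : fieldType) (P Q : pred ('I_3 -> K)) (phi : Pt P -> Pt Q)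
  (m : ('I_3 -> K) -> 'I_3 -> K) :
  (forall i, pf (fun v => m v i)) -> (forall y, val (phi y) = m (val y)) ->
  forall f, regular f -> regular (fun y => f (phi y)).
Proof.
move=> hm hphi f [p Hp].
have [r Hr] := pf_comp hm (pf_meval p).
by exists r => y; rewrite Hp hphi Hr.
Qed.

Lemma pf_sigmap (K : fieldType) i : pf (fun v : 'I_3 -> K => sigmap v i).
Proof.
rewrite /sigmap; apply: pf_mkpt; try apply: pf_coord.
by apply: pf_opp; apply: pf_coord.
Qed.

Lemma ext_Dprime (K : fieldType) (charK : [pchar K] =i pred0) e (e0 : (0 < e)%N)
  (D : (Pt (onS e) -> K) -> (Pt (onS e) -> K)) (hD : is_Kderivation D)
  (p0 p1 p2 vA vB vC : {mpoly K[3]}) (ht : tangent e vA vB vC) :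
  (forall y, D (fun z => val z i0) y = p0.@[val y]) ->
  (forall y, D (fun z => val z i1) y = p1.@[val y]) ->
  (forall y, D (fun z => val z i2) y = p2.@[val y]) ->
  (forall v, onS' e v ->
   [/\ 2 * v i0 * vA.@[v] = p0.@[Fmap v], vB.@[v] + vC.@[v] = p1.@[Fmap v] &
       v i0 * (vB.@[v] - vC.@[v]) + (v i1 - v i2) * vA.@[v] = p2.@[Fmap v]]) ->
  extends_along_F D (Dprime e vA vB vC).
Proof.
move=> H0 H1 H2 HV f /reg_eq [p ->] x.
have hder := Dprime_der charK e0 ht.
have [hR hA hL] := hder.
have regF : forall q : {mpoly K[3]}, regular (fun y : Pt (onS' e) => q.@[Fmap (val y)]).
  move=> q; have [r Hr] := pf_comp (@pf_Fmap K) (pf_meval q).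
  by exists r => y; rewrite Hr.
change (Dprime e vA vB vC (fun y => p.@[Fmap (val y)]) x = D (rf (onS e) p) (Fpt x)).
rewrite (der_chain hD.1 (Kder_const hD)) /=.
pose d q := Dprime e vA vB vC (fun y => q.@[Fmap (val y)]) x.
rewrite -/(d p) (@chain_gen K (Fmap (val x)) d).
- congr dot3; apply: functional_extensionality => i.
  rewrite /d FG (Dprime_rf charK e0 ht) /Dp.
  have [E0 E1 E2] := HV _ (valP x).
  case: (ord3_cases i) => [->|[->|->]]; rewrite /mkpt /=.
  + by rewrite dot3_G0 /= H0 -E0.
  + by rewrite dot3_G1 /= H1 -E1.
  + by rewrite dot3_G2 /= H2 -E2.
- move=> c; rewrite /d.
  have -> : (fun y : Pt (onS' e) => (c%:MP : {mpoly K[3]}).@[Fmap (val y)]) = (fun _ => c).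
    by apply: functional_extensionality => y; rewrite mevalC.
  exact: (Dprime_const charK e0 ht).
- move=> q1 q2; rewrite /d.
  have -> : (fun y : Pt (onS' e) => (q1 + q2).@[Fmap (val y)]) =
     (fun y => q1.@[Fmap (val y)] + q2.@[Fmap (val y)]).
    by apply: functional_extensionality => y; rewrite mevalD.
  by apply: hA; apply: regF.
- move=> q1 q2; rewrite /d.
  have -> : (fun y : Pt (onS' e) => (q1 * q2).@[Fmap (val y)]) =
     (fun y => q1.@[Fmap (val y)] * q2.@[Fmap (val y)]).
    by apply: functional_extensionality => y; rewrite mevalM.
  by rewrite hL; try apply: regF.
Qed.

Lemma sig_sig (K : fieldType) e (x : Pt (@onS' K e)) : sigpt (sigpt x) = x.
Proof.
apply: Pt_eq => /=; apply: functional_extensionality => j.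
by case: (ord3_cases j) => [->|[->|->]]; rewrite /sigmap /mkpt /= ?opprK.
Qed.

Lemma F_sig (K : fieldType) e (x : Pt (@onS' K e)) : Fpt (sigpt x) = Fpt x.
Proof.
apply: Pt_eq => /=; apply: functional_extensionality => j.
by case: (ord3_cases j) => [->|[->|->]]; rewrite /Fmap /sigmap /mkpt /=; ring.
Qed.

Lemma comm_gen (K : fieldType) (charK : [pchar K] =i pred0) e (e0 : (0 < e)%N)
  (D : (Pt (onS e) -> K) -> (Pt (onS e) -> K))
  (D1 : (Pt (onS' e) -> K) -> (Pt (onS' e) -> K)) :
  is_derivation D1 -> (forall c x, D1 (fun _ => c) x = 0) -> extends_along_F D D1 ->
  commutes_sigma D1.
Proof.
move=> h1 c1 x1.
have [hR hA hL] := h1.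
have regs : forall f : Pt (onS' e) -> K, regular f -> regular (fun y => f (sigpt y)).
  by move=> f; apply: (reg_comp (m := @sigmap K)) => // i; apply: pf_sigmap.
pose E f x := D1 (f \o @sigpt K e) (sigpt x).
have hE : is_derivation E.
  split.
  - move=> f hf; have [r Hr] := hR _ (regs _ hf).
    have [q Hq] := pf_comp (@pf_sigmap K) (pf_meval r).
    by exists q => x; rewrite /E Hr -Hq.
  - move=> f g hf hg x; rewrite /E; exact: hA (regs _ hf) (regs _ hg) _.
  - move=> f g hf hg x; rewrite /E /=.
    have := hL _ _ (regs _ hf) (regs _ hg) (sigpt x); rewrite /= sig_sig => <- //.
have cE : forall c x, E (fun _ => c) x = 0 by move=> c x; apply: c1.
have xE : extends_along_F D E.
  move=> f hf x; rewrite /E.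
  have -> : (f \o @Fpt K e) \o @sigpt K e = f \o @Fpt K e.
    by apply: functional_extensionality => y; rewrite /comp F_sig.
  by rewrite x1 // F_sig.
move=> f hf x.
have := uniq_ext charK e0 hE h1 cE c1 xE x1 hf (sigpt x).
by rewrite /E sig_sig.
Qed.


Theorem lemma11_core (K : fieldType) (e1 : nat)
  (charK : [pchar K] =i pred0) (e0 : (0 < e1)%N)
  (D : (Pt (@onS K e1) -> K) -> (Pt (@onS K e1) -> K))
  (hD : is_Kderivation D) :
  exists D' : (Pt (@onS' K e1) -> K) -> (Pt (@onS' K e1) -> K),
    [/\ is_derivation D', commutes_sigma D', extends_along_F D D',
        (forall c x, D' (fun _ => c) x = 0) &
        (forall D'' : (Pt (@onS' K e1) -> K) -> (Pt (@onS' K e1) -> K),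
            is_derivation D'' -> extends_along_F D D'' ->
            forall f, regular f -> forall x, D'' f x = D' f x)].
Proof.
have [[hR hA hL] hK] := hD.
have [p0 Hp0] := hR _ (reg_coord (onS e1) i0).
have [p1 Hp1] := hR _ (reg_coord (onS e1) i1).
have [p2 Hp2] := hR _ (reg_coord (onS e1) i2).
have T := tanS e0 hD Hp0 Hp1 Hp2.
have [VA [VB [VC [hVA hVB hVC HV]]]] :=
  construct_V charK e0 (pf_meval p0) (pf_meval p1) (pf_meval p2) T.
have [vA HvA] := hVA; have [vB HvB] := hVB; have [vC HvC] := hVC.
have ht : tangent e1 vA vB vC.
  by move=> v hv; have [_ _ _] := HV v hv; rewrite HvA HvB HvC.
have HV' : forall v, onS' e1 v ->
   [/\ 2 * v i0 * vA.@[v] = p0.@[Fmap v], vB.@[v] + vC.@[v] = p1.@[Fmap v] &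
       v i0 * (vB.@[v] - vC.@[v]) + (v i1 - v i2) * vA.@[v] = p2.@[Fmap v]].
  by move=> v hv; have [E0 E1 E2 _] := HV v hv; rewrite -HvA -HvB -HvC.
have hder := Dprime_der charK e0 ht.
have hc := Dprime_const charK e0 ht.
have hext := ext_Dprime charK e0 hD ht Hp0 Hp1 Hp2 HV'.
exists (Dprime e1 vA vB vC); split => //.
- exact: (comm_gen charK e0 hder hc hext).
- move=> D'' h'' x''.
  have c'' : forall c x, D'' (fun _ => c) x = 0.
    move=> c x; have := x'' (fun _ => c) _ x.
    rewrite /comp (Kder_const hD) => -> //.
    by exists c%:MP => y; rewrite mevalC.
  exact: (uniq_ext charK e0 h'' hder c'' hc x'' hext).
Qed.


Definition scw (K : fieldType) (w : 'I_3 -> nat) (l : K) (v : 'I_3 -> K) : 'I_3 -> K :=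
  fun i => l ^+ w i * v i.

Lemma MS (K : fieldType) (w : 'I_3 -> nat) (l : K) (v : 'I_3 -> K) (m : 'X_{1..3}) :
  \prod_(i < 3) (l ^+ w i * v i) ^+ m i = l ^+ wdeg w m * \prod_(i < 3) v i ^+ m i.
Proof.
rewrite /wdeg -prodrXr -big_split /=; apply: eq_bigr => i _.
by rewrite exprMn exprM.
Qed.

Lemma meval_scw (K : fieldType) w (l : K) v (p : {mpoly K[3]}) :
  p.@[scw w l v] = \sum_(m <- msupp p) p@_m * (l ^+ wdeg w m * \prod_(i < 3) v i ^+ m i).
Proof. by rewrite mevalE; apply: eq_bigr => m _; rewrite -MS. Qed.

Lemma HE (K : fieldType) w (d : int) (p : {mpoly K[3]}) (l : K) v :
  whomog_poly w d p -> p.@[scw w l v] = l ^ d * p.@[v].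
Proof.
move=> hp; rewrite meval_scw mevalE mulr_sumr big_seq [RHS]big_seq.
apply: eq_bigr => m hm; rewrite -(hp m hm) /=.
by rewrite mulrCA.
Qed.

Definition hc (K : fieldType) (w : 'I_3 -> nat) (p : {mpoly K[3]}) (d : nat) : {mpoly K[3]} :=
  \sum_(m <- msupp p | wdeg w m == d) p@_m *: 'X_[m].

Lemma hc_homog (K : fieldType) w (p : {mpoly K[3]}) (d : nat) : whomog_poly w d (hc w p d).
Proof.
move=> m'; apply: contraTeq => hne.
rewrite mcoeff_msupp negbK /hc raddf_sum /=.
rewrite big1 // => m /eqP hm; rewrite mcoeffZ mcoeffX.
case: eqP => [E|]; last by rewrite mulr0.
by move: hne; rewrite -E hm eqxx.
Qed.

Lemma hc_eval (K : fieldType) w (p : {mpoly K[3]}) (d : nat) v :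
  (hc w p d).@[v] = \sum_(m <- msupp p | wdeg w m == d) p@_m * \prod_(i < 3) v i ^+ m i.
Proof.
rewrite /hc raddf_sum /=; apply: eq_bigr => m _.
by rewrite mevalZ mevalX.
Qed.

Definition wbound (K : fieldType) w (p : {mpoly K[3]}) : nat :=
  (\max_(m <- msupp p) wdeg w m).+1.

Lemma wbound_lt (K : fieldType) w (p : {mpoly K[3]}) m : m \in msupp p -> (wdeg w m < wbound w p)%N.
Proof. by move=> hm; rewrite ltnS; apply: leq_bigmax_seq. Qed.

Lemma sum_hc (K : fieldType) w (p : {mpoly K[3]}) (l : K) v N :
  (wbound w p <= N)%N ->
  p.@[scw w l v] = \sum_(k < N) (hc w p k).@[v] * l ^+ k.
Proof.
move=> hN; rewrite meval_scw.
have -> : \sum_(k < N) (hc w p k).@[v] * l ^+ k =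
   \sum_(k < N) \sum_(m <- msupp p)
      (if wdeg w m == k then p@_m * \prod_(i < 3) v i ^+ m i * l ^+ k else 0).
  apply: eq_bigr => k _; rewrite hc_eval big_mkcond mulr_suml; apply: eq_bigr => m _.
  by case: ifP => _; rewrite ?mul0r.
rewrite exchange_big /= big_seq [RHS]big_seq; apply: eq_bigr => m hm.
have hlt : (wdeg w m < N)%N by apply: leq_trans (wbound_lt w hm) hN.
rewrite (bigD1 (Ordinal hlt)) //= eqxx [X in _ + X]big1 ?addr0; first by ring.
move=> k hk; case: eqP => // E; case/eqP: hk; apply: val_inj; by rewrite /= E.
Qed.

Lemma scw1 (K : fieldType) w (v : 'I_3 -> K) : scw w 1 v = v.
Proof. by apply: functional_extensionality => i; rewrite /scw expr1n mul1r. Qed.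

Lemma scwM (K : fieldType) w (l m : K) (v : 'I_3 -> K) : scw w l (scw w m v) = scw w (l * m) v.
Proof. by apply: functional_extensionality => i; rewrite /scw mulrA exprMn. Qed.

Lemma pf_scw (K : fieldType) w (l : K) i : pf (fun v => scw w l v i).
Proof. by apply: pf_mul; [apply: pf_const|apply: pf_coord]. Qed.

Lemma extract (K : fieldType) (charK : [pchar K] =i pred0) w (P : pred ('I_3 -> K))
  (sc : K -> Pt P -> Pt P) (hsc : forall l x, val (sc l x) = scw w l (val x))
  (f : Pt P -> K) (d : int) :
  regular f -> (forall l x, l != 0 -> f (sc l x) = l ^ d * f x) -> whomog w d f.
Proof.
move=> [p Hp] hf.
case: d hf => [n|k] hf.
- pose N := (wbound w p + n.+1)%N.
  have hN : (wbound w p <= N)%N by rewrite leq_addr.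
  have hn : (n < N)%N by rewrite /N addnC ltn_addr.
  exists (hc w p n); split; first exact: hc_homog.
  move=> x; pose Q := \poly_(k < N) (hc w p k).@[val x].
  have HQ : Q - f x *: 'X^n = 0.
    apply: (poly_zero_nz charK) => l ln0.
    rewrite hornerD hornerN hornerZ hornerXn horner_poly.
    rewrite -(sum_hc l (val x) hN) -hsc -Hp hf //; rewrite /exprz /=; ring.
  have := congr1 (fun q : {poly K} => q`_n) HQ.
  by rewrite coefB coef_poly hn coefZ coefXn eqxx mulr1 coef0 => /eqP; rewrite subr_eq0 => /eqP.
- exists 0; split; first by move=> m; rewrite msupp0.
  move=> x; rewrite meval0.
  pose N := wbound w p.
  pose Q := \poly_(j < N) (hc w p j).@[val x].
  have HQ : 'X^(k.+1) * Q - (f x)%:P = 0.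
    apply: (poly_zero_nz charK) => l ln0.
    rewrite hornerD hornerN hornerC hornerM hornerXn horner_poly.
    rewrite -(sum_hc l (val x) (leqnn N)) -hsc -Hp hf //.
    rewrite /exprz /= mulrA mulfV ?mul1r ?subrr //.
    by rewrite expf_eq0 (negbTE ln0) andbF.
  have := congr1 (fun q : {poly K} => q`_0) HQ.
  by rewrite coefB coefXnM /= coefC /= coef0 sub0r => /eqP; rewrite oppr_eq0 => /eqP.
Qed.


Lemma onS_sc (K : fieldType) e (l : K) v : onS e v -> onS e (scw (wS e) l v).
Proof.
rewrite /onS /scw /wS /= => /eqP H; apply/eqP.
rewrite [l ^+ e.+1]exprS.
have -> : (l ^+ 2 * v i0) ^+ e = (l ^+ e) ^+ 2 * v i0 ^+ e by rewrite exprMn -!exprM mulnC.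
set A := l ^+ e.
have -> : (l * A * v i2) ^+ 2 + ((A ^+ 2 * v i0 ^+ e) - (A * v i1) ^+ 2) * (l ^+ 2 * v i0)
  = (l * A) ^+ 2 * (v i2 ^+ 2 + (v i0 ^+ e - v i1 ^+ 2) * v i0) by ring.
by rewrite H mulr0.
Qed.

Lemma onS'_sc (K : fieldType) e (l : K) v : onS' e v -> onS' e (scw (wS' e) l v).
Proof.
rewrite /onS' /scw /wS' /= => /eqP H; apply/eqP.
rewrite expr1 exprMn mulnC exprM.
set A := l ^+ e.
have -> : A ^+ 2 * v i0 ^+ (e * 2) - 4 * (A * v i1) * (A * v i2)
  = A ^+ 2 * (v i0 ^+ (e * 2) - 4 * v i1 * v i2) by ring.
by rewrite mulnC H mulr0.
Qed.

Definition scS (K : fieldType) e (l : K) (y : Pt (onS e)) : Pt (onS e) :=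
  exist _ (scw (wS e) l (val y)) (onS_sc l (valP y)).
Definition scS' (K : fieldType) e (l : K) (y : Pt (onS' e)) : Pt (onS' e) :=
  exist _ (scw (wS' e) l (val y)) (onS'_sc l (valP y)).

Lemma F_sc (K : fieldType) e (l : K) (x : Pt (onS' e)) : Fpt (scS' l x) = scS l (Fpt x).
Proof.
apply: Pt_eq => /=; apply: functional_extensionality => j.
case: (ord3_cases j) => [->|[->|->]]; rewrite /Fmap /scw /wS /wS' /mkpt /= ?exprS ?expr0; ring.
Qed.

Lemma scS'_inv (K : fieldType) e (l : K) (x : Pt (onS' e)) : l != 0 ->
  scS' l (scS' l^-1 x) = x.
Proof. by move=> ln0; apply: Pt_eq => /=; rewrite scwM mulfV // scw1. Qed.

Lemma scS'_inv' (K : fieldType) e (l : K) (x : Pt (onS' e)) : l != 0 ->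
  scS' l^-1 (scS' l x) = x.
Proof. by move=> ln0; apply: Pt_eq => /=; rewrite scwM mulVf // scw1. Qed.

Lemma reg_sc (K : fieldType) (P : pred ('I_3 -> K)) w (sc : Pt P -> Pt P) (l : K) :
  (forall y, val (sc y) = scw w l (val y)) ->
  forall f, regular f -> regular (fun y => f (sc y)).
Proof.
move=> h f [p Hp].
have [r Hr] := pf_comp (@pf_scw K w l) (pf_meval p).
by exists r => y; rewrite Hp h Hr.
Qed.

Lemma rf_sum (K : fieldType) w (p : {mpoly K[3]}) e :
  rf (onS e) p = rf (onS e) (\sum_(k < wbound w p) hc w p k).
Proof.
apply: functional_extensionality => y; rewrite /rf raddf_sum /=.
rewrite -[val y](scw1 w) (sum_hc 1 _ (leqnn _)) scw1.
by apply: eq_bigr => k _; rewrite expr1n mulr1.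
Qed.

Lemma D_scale (K : fieldType) e (D : (Pt (onS e) -> K) -> (Pt (onS e) -> K))
  (hD : is_Kderivation D) (r : int) (hr : whomog_der (wS e) r D) (l : K) (ln0 : l != 0) :
  forall f, regular f -> forall y, l ^ r * D (fun z => f (scS l z)) y = D f (scS l y).
Proof.
have [[hR hA hL] hK] := hD.
have hc0 := Kder_const hD.
have regsc := reg_sc (sc := scS l) (fun y => erefl).
pose Pr (g : Pt (onS e) -> K) := forall y, l ^ r * D (fun z => g (scS l z)) y = D g (scS l y).
move=> f /reg_eq [p ->].
rewrite (rf_sum (wS e)).
elim: (wbound (wS e) p) => [|n IH].
- have -> : rf (onS e) (\sum_(k < 0) hc (wS e) p k) = (fun _ => 0).
    by apply: functional_extensionality => y; rewrite /rf big_ord0 meval0.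
  by move=> y; rewrite !hc0 mulr0.
- have -> : rf (onS e) (\sum_(k < n.+1) hc (wS e) p k) =
     (fun y => rf (onS e) (\sum_(k < n) hc (wS e) p k) y + rf (onS e) (hc (wS e) p n) y).
    by apply: functional_extensionality => y; rewrite /rf big_ord_recr mevalD.
  move=> y; rewrite (hA _ _ (reg_rf _ _) (reg_rf _ _)).
  rewrite (hA (fun z => rf (onS e) _ (scS l z)) (fun z => rf (onS e) _ (scS l z)));
    try by apply: regsc; apply: reg_rf.
  rewrite mulrDr IH; congr (_ + _).
  set g := rf (onS e) (hc (wS e) p n).
  have hg : whomog (wS e) n g by exists (hc (wS e) p n); split => //; apply: hc_homog.
  have [q [hq Hq]] := hr n g hg.
  have -> : (fun z => g (scS l z)) = (fun z => l ^+ n * g z).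
    apply: functional_extensionality => z; rewrite /g /rf /=.
    by rewrite (HE l (val z) (@hc_homog K (wS e) p n)).
  rewrite hK; last exact: reg_rf.
  rewrite !Hq /= (HE l (val y) hq) expfzDr // mulrA [l ^ r * _]mulrC.
  by [].
Qed.


Lemma homog_D' (K : fieldType) (charK : [pchar K] =i pred0) e (e0 : (0 < e)%N)
  (D : (Pt (onS e) -> K) -> (Pt (onS e) -> K)) (hD : is_Kderivation D)
  (r : int) (hr : whomog_der (wS e) r D)
  (D' : (Pt (onS' e) -> K) -> (Pt (onS' e) -> K))
  (hder : is_derivation D') (hc' : forall c x, D' (fun _ => c) x = 0)
  (hext : extends_along_F D D')
  (huniq : forall D'', is_derivation D'' -> extends_along_F D D'' ->
            forall f, regular f -> forall x, D'' f x = D' f x) :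
  whomog_der (wS' e) r D'.
Proof.
have [hR hA hL] := hder.
have regsc : forall (l : K) (f : Pt (onS' e) -> K), regular f -> regular (fun z => f (scS' l z)).
  by move=> l; apply: (@reg_sc K (onS' e) (wS' e) (scS' l) l) => y.
have step1 : forall l : K, l != 0 -> forall f, regular f -> forall x,
    l ^ r * D' (fun z => f (scS' l z)) (scS' l^-1 x) = D' f x.
  move=> l ln0.
  pose Dl g x := l ^ r * D' (fun z => g (scS' l z)) (scS' l^-1 x).
  apply: (huniq Dl).
  - split.
    + move=> g hg; have [s Hs] := hR _ (regsc l g hg).
      have [s' Hs'] := pf_comp (@pf_scw K (wS' e) l^-1) (pf_meval s).
      exists ((l ^ r)%:MP * s') => x; rewrite /Dl Hs mevalM mevalC -Hs'.
      by [].
    + move=> g h hg hh x; rewrite /Dl.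
      by rewrite (hA (fun z => g (scS' l z)) (fun z => h (scS' l z))) ?mulrDr //; apply: regsc.
    + move=> g h hg hh x; rewrite /Dl.
      rewrite (hL (fun z => g (scS' l z)) (fun z => h (scS' l z))); try by apply: regsc.
      by rewrite !scS'_inv //; ring.
  - move=> g hg x; rewrite /Dl.
    have -> : (fun z => (g \o @Fpt K e) (scS' l z)) = (fun w => g (scS l w)) \o @Fpt K e.
      by apply: functional_extensionality => z; rewrite /comp F_sc.
    rewrite hext; last exact: (@reg_sc K (onS e) (wS e) (scS l) l (fun y => erefl) g hg).
    by rewrite (D_scale hD hr ln0 hg) -F_sc scS'_inv.
move=> m f [q [hq Hq]].
have hf : regular f by exists q.
apply: (extract charK (sc := fun l x => scS' l x)) => //.
  exact: hR.
move=> l x ln0.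
have := step1 l ln0 f hf (scS' l x); rewrite scS'_inv' // => <-.
have -> : (fun z => f (scS' l z)) = (fun z => l ^+ m * f z).
  by apply: functional_extensionality => z; rewrite !Hq /= (HE l (val z) hq).
have hcst : regular (fun _ : Pt (onS' e) => l ^+ m) by exists (l ^+ m)%:MP => y; rewrite mevalC.
rewrite (hL _ _ hcst hf) hc' mul0r addr0.
by rewrite expfzDr // mulrA [l ^ r * _]mulrC.
Qed.

Unset Implicit Arguments.

Theorem lemma11 (K : closedFieldType) (e1 : nat)
  (charK : [pchar K] =i pred0) (he1 : (2 < e1)%N) (odd_e1 : odd e1)
  (D : (Pt (@onS K e1) -> K) -> (Pt (@onS K e1) -> K))
  (hD : is_Kderivation D) :
  exists D' : (Pt (@onS' K e1) -> K) -> (Pt (@onS' K e1) -> K),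
    [/\ is_derivation D', commutes_sigma D', extends_along_F D D',
        (forall D'' : (Pt (@onS' K e1) -> K) -> (Pt (@onS' K e1) -> K),
            is_derivation D'' -> commutes_sigma D'' -> extends_along_F D D'' ->
            forall f, regular f -> forall x, D'' f x = D' f x) &
        ((exists r : int, whomog_der (wS e1) r D) ->
           exists r' : int, whomog_der (wS' e1) r' D')].
Proof.
have e0 : (0 < e1)%N by apply: leq_trans he1.
have [D' [hder hcom hext hc huniq]] := lemma11_core charK e0 hD.
exists D'; split => //.
- by move=> D'' h'' _ x''; apply: huniq.
- move=> [r hr]; exists r.
  exact: (homog_D' charK e0 hD hr hder hc hext huniq).
Qed.
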